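(* Let $D_K$ be a relative $K$-entropy satisfying Properties (a) and (b) below, and let $H_K$ be the associated conditional entropy, defined by one of the two forms below. Let $V_A:\mathcal{H}_A\to\mathcal{H}_{A'}$ and $V_B:\mathcal{H}_B\to\mathcal{H}_{B'}$ be isometries, $\rho_{AB}$ a density operator, and $\rho_{A'B'}:=(V_A\otimes V_B)\rho_{AB}(V_A^\dagger\otimes V_B^\dagger)$. Then $H_K(A|B)=H_K(A'|B')$, where the left side is evaluated on $\rho_{AB}$ and the right side on $\rho_{A'B'}$.
   Context: All Hilbert spaces are finite-dimensional. A relative $K$-entropy $D_K$ assigns to every pair $(S,T)$ of positive semidefinite operators on a common Hilbert space an extended real number $D_K(S\|T)$. Properties: (a) for every trace-preserving completely positive map $\mathcal{E}$ (possibly between different spaces), $D_K(\mathcal{E}(S)\|\mathcal{E}(T))\le D_K(S\|T)$; (b) for positive semidefinite $S,T$ on $\mathcal{H}$ and $T'$ on $\mathcal{H}'$, $D_K(S\oplus 0\,\|\,T\oplus T')=D_K(S\|T)$. The conditional $K$-entropy of a density operator $\rho_{AB}$ is either $H_K(A|B)=-D_K(\rho_{AB}\|\mathbb{1}_A\otimes\rho_B)$ for all $\rho_{AB}$, or $H_K(A|B)=\max_{\sigma_B}[-D_K(\rho_{AB}\|\mathbb{1}_A\otimes\sigma_B)]$ for all $\rho_{AB}$, maximum over density operators $\sigma_B$. *)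

(* Defs.v *)
From HB Require Import structures.
From mathcomp Require Import all_boot all_order all_algebra.
From mathcomp Require Import complex mxtens.
From mathcomp Require Import reals constructive_ereal.

Set Implicit Arguments.
Unset Strict Implicit.
Unset Printing Implicit Defensive.

Import Order.TTheory GRing.Theory Num.Theory.
Local Open Scope ring_scope.

Section QDefs.
Variable R : realType.
Local Notation C := R[i].

Definition adjmx {m n : nat} (A : 'M[C]_(m, n)) : 'M[C]_(n, m) :=
  (map_mx Num.conj A)^T.

Definition psd {n : nat} (A : 'M[C]_n) : Prop :=
  adjmx A = A /\ forall v : 'cV[C]_n, 0 <= (adjmx v *m A *m v) 0 0.

Definition density {n : nat} (A : 'M[C]_n) : Prop := psd A /\ \tr A = 1.

Definition is_isometry {m n : nat} (V : 'M[C]_(m, n)) : Prop :=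
  adjmx V *m V = 1%:M.

Definition blockmx {k n : nat} (X : 'M[C]_(k * n)) (i j : 'I_k) : 'M[C]_n :=
  \matrix_(a, b) X (mxtens_index (i, a)) (mxtens_index (j, b)).

(* id_k (x) E *)
Definition ampl {n m : nat} (k : nat) (E : 'M[C]_n -> 'M[C]_m)
  (X : 'M[C]_(k * n)) : 'M[C]_(k * m) :=
  \sum_(i < k) \sum_(j < k) (delta_mx i j *t E (blockmx X i j)).

Definition linear_map {n m : nat} (E : 'M[C]_n -> 'M[C]_m) : Prop :=
  forall (a : C) (X Y : 'M[C]_n), E (a *: X + Y) = a *: E X + E Y.

Definition completely_positive {n m : nat} (E : 'M[C]_n -> 'M[C]_m) : Prop :=
  linear_map E /\ forall (k : nat) (X : 'M[C]_(k * n)), psd X -> psd (@ampl n m k E X).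

Definition trace_preserving {n m : nat} (E : 'M[C]_n -> 'M[C]_m) : Prop :=
  forall X : 'M[C]_n, \tr (E X) = \tr X.

Definition rel_ent := forall n : nat, 'M[C]_n -> 'M[C]_n -> \bar R.

Definition prop_a (D : rel_ent) : Prop :=
  forall (n m : nat) (E : 'M[C]_n -> 'M[C]_m), completely_positive E ->
    trace_preserving E ->
    forall S T : 'M[C]_n, psd S -> psd T ->
      (D m (E S) (E T) <= D n S T)%E.

Definition prop_b (D : rel_ent) : Prop :=
  forall (n n' : nat) (S T : 'M[C]_n) (T' : 'M[C]_n'),
    psd S -> psd T -> psd T' ->
    D (n + n')%N (block_mx S 0 0 0) (block_mx T 0 0 T') = D n S T.

Definition ptrA {dA dB : nat} (X : 'M[C]_(dA * dB)) : 'M[C]_dB :=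
  \matrix_(j, j') \sum_(i < dA) X (mxtens_index (i, j)) (mxtens_index (i, j')).

Definition Hcond1 (D : rel_ent) (dA dB : nat) (rho : 'M[C]_(dA * dB)) : \bar R :=
  (- D (dA * dB)%N rho (1%:M *t ptrA rho))%E.

Definition Hcond_sigma (D : rel_ent) (dA dB : nat) (rho : 'M[C]_(dA * dB))
  (sigma : 'M[C]_dB) : \bar R :=
  (- D (dA * dB)%N rho ((1%:M : 'M[C]_dA) *t sigma))%E.

Definition is_cond_entropy (D : rel_ent)
  (H : forall dA dB : nat, 'M[C]_(dA * dB) -> \bar R) : Prop :=
  (forall (dA dB : nat) (rho : 'M[C]_(dA * dB)), density rho ->
      H dA dB rho = Hcond1 D rho)
  \/
  (forall (dA dB : nat) (rho : 'M[C]_(dA * dB)), density rho ->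
      (exists sigma : 'M[C]_dB, density sigma /\ H dA dB rho = Hcond_sigma D rho sigma)
      /\ (forall sigma : 'M[C]_dB, density sigma ->
            (Hcond_sigma D rho sigma <= H dA dB rho)%E)).

End QDefs.

(* Main.v *)
Require Import Defs.
From HB Require Import structures.
From mathcomp Require Import all_boot all_order all_algebra.
From mathcomp Require Import complex mxtens.
From mathcomp Require Import reals constructive_ereal.
From mathcomp Require Import ring.

Import Order.TTheory GRing.Theory Num.Theory.
Local Open Scope ring_scope.
Set Implicit Arguments.
Unset Strict Implicit.
Unset Printing Implicit Defensive.
Section Q.
Variable R : realType.
Local Notation C := R[i].

Lemma adjmxE m n (A : 'M[C]_(m,n)) i j : adjmx A i j = Num.conj (A j i).
Proof. by rewrite !mxE. Qed.

Lemma adjmxK m n (A : 'M[C]_(m,n)) : adjmx (adjmx A) = A.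
Proof. by apply/matrixP => i j; rewrite !adjmxE conjCK. Qed.

Lemma adjmxM m n p (A : 'M[C]_(m,n)) (B : 'M[C]_(n,p)) :
  adjmx (A *m B) = adjmx B *m adjmx A.
Proof.
apply/matrixP => i j; rewrite adjmxE !mxE rmorph_sum; apply: eq_bigr => k _.
by rewrite rmorphM mulrC !adjmxE.
Qed.

Lemma adjmxD m n (A B : 'M[C]_(m,n)) : adjmx (A + B) = adjmx A + adjmx B.
Proof. by apply/matrixP => i j; rewrite !mxE rmorphD. Qed.

Lemma adjmxN m n (A : 'M[C]_(m,n)) : adjmx (- A) = - adjmx A.
Proof. by apply/matrixP => i j; rewrite !mxE rmorphN. Qed.

Lemma adjmxB m n (A B : 'M[C]_(m,n)) : adjmx (A - B) = adjmx A - adjmx B.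
Proof. by rewrite adjmxD adjmxN. Qed.

Lemma adjmx0 m n : adjmx (0 : 'M[C]_(m,n)) = 0.
Proof. by apply/matrixP => i j; rewrite !mxE rmorph0. Qed.

Lemma adjmx1 n : adjmx (1%:M : 'M[C]_n) = 1%:M.
Proof. by apply/matrixP => i j; rewrite !mxE rmorph_nat eq_sym. Qed.

Lemma adjmx_tens m n p q (A : 'M[C]_(m,n)) (B : 'M[C]_(p,q)) :
  adjmx (A *t B) = adjmx A *t adjmx B.
Proof. by apply/matrixP => i j; rewrite !mxE rmorphM. Qed.

Lemma adjmx_col m1 m2 n (A : 'M[C]_(m1,n)) (B : 'M[C]_(m2,n)) :
  adjmx (col_mx A B) = row_mx (adjmx A) (adjmx B).
Proof. by rewrite /adjmx map_col_mx tr_col_mx. Qed.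

Lemma adjmx_row m n1 n2 (A : 'M[C]_(m,n1)) (B : 'M[C]_(m,n2)) :
  adjmx (row_mx A B) = col_mx (adjmx A) (adjmx B).
Proof. by rewrite /adjmx map_row_mx tr_row_mx. Qed.

Lemma psd0 n : psd (0 : 'M[C]_n).
Proof. by split; [rewrite adjmx0 | move=> v; rewrite mulmx0 mul0mx mxE]. Qed.

Lemma psdD n (A B : 'M[C]_n) : psd A -> psd B -> psd (A + B).
Proof.
move=> [hA qA] [hB qB]; split; first by rewrite adjmxD hA hB.
by move=> v; rewrite mulmxDr mulmxDl mxE addr_ge0.
Qed.

Lemma psd_sum n I (r : seq I) (P : pred I) (F : I -> 'M[C]_n) :
  (forall i, P i -> psd (F i)) -> psd (\sum_(i <- r | P i) F i).
Proof. by move=> h; apply: (big_ind (fun A : 'M[C]_n => psd A)) => //; [exact: psd0 | exact: psdD]. Qed.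

Lemma psd_conj m n (M : 'M[C]_(m,n)) (X : 'M[C]_n) :
  psd X -> psd (M *m X *m adjmx M).
Proof.
move=> [hX qX]; split; first by rewrite !adjmxM adjmxK hX mulmxA.
move=> v; have := qX (adjmx M *m v).
by rewrite adjmxM adjmxK !mulmxA.
Qed.

Definition kraus m p q (K : 'I_m -> 'M[C]_(q,p)) (X : 'M[C]_p) : 'M[C]_q :=
  \sum_l K l *m X *m adjmx (K l).

Lemma tens_sumr m n p q I (r : seq I) (P : pred I) (A : 'M[C]_(m,n))
  (F : I -> 'M[C]_(p,q)) :
  A *t (\sum_(i <- r | P i) F i) = \sum_(i <- r | P i) A *t F i.
Proof.
apply/matrixP => a b; rewrite summxE !mxE summxE mulr_sumr.
by apply: eq_bigr => i _; rewrite !mxE.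
Qed.

Lemma tensmxDl m n p q (A A' : 'M[C]_(m,n)) (B : 'M[C]_(p,q)) :
  (A + A') *t B = A *t B + A' *t B.
Proof. by apply/matrixP => a b; rewrite !mxE mulrDl. Qed.

Lemma tensmxBl m n p q (A A' : 'M[C]_(m,n)) (B : 'M[C]_(p,q)) :
  (A - A') *t B = A *t B - A' *t B.
Proof. by apply/matrixP => a b; rewrite !mxE mulrBl. Qed.

Lemma tensmxDr m n p q (A : 'M[C]_(m,n)) (B B' : 'M[C]_(p,q)) :
  A *t (B + B') = A *t B + A *t B'.
Proof. by apply/matrixP => a b; rewrite !mxE mulrDr. Qed.

Lemma tens11 m n : (1%:M : 'M[C]_m) *t (1%:M : 'M[C]_n) = 1%:M.
Proof.
apply/matrixP => r c.
case: (mxtens_indexP r) => i a; case: (mxtens_indexP c) => j b.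
rewrite tensmxE !mxE.
have -> : (mxtens_index (i, a) == mxtens_index (j, b)) = (i == j) && (a == b).
  apply/eqP/andP => [/(can_inj (@mxtens_indexK _ _)) [-> ->] //|[/eqP -> /eqP ->] //].
by case: (i == j); case: (a == b); rewrite /= ?mulr1 ?mulr0 ?mul0r.
Qed.

Lemma tens_conj k p q (K : 'M[C]_(q,p)) (d : 'M[C]_k) (B : 'M[C]_p) :
  d *t (K *m B *m adjmx K) = (1%:M *t K) *m (d *t B) *m adjmx (1%:M *t K).
Proof.
by rewrite adjmx_tens adjmx1 !tensmx_mul mul1mx mulmx1.
Qed.

Lemma blocks_sum k p (X : 'M[C]_(k * p)) :
  \sum_(i < k) \sum_(j < k) (delta_mx i j *t blockmx X i j) = X.
Proof.
apply/matrixP => r c.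
case: (mxtens_indexP r) => i0 a; case: (mxtens_indexP c) => j0 b.
rewrite summxE (bigD1 i0) //= [X in _ + X]big1; last first.
  move=> i /negbTE hi; rewrite summxE big1 // => j _.
  by rewrite tensmxE !mxE eq_sym hi mul0r.
rewrite summxE (bigD1 j0) //= big1; last first.
  by move=> j /negbTE hj; rewrite tensmxE !mxE eqxx /= eq_sym hj mul0r.
by rewrite !addr0 tensmxE !mxE !eqxx mul1r.
Qed.

Lemma ampl_kraus k m p q (K : 'I_m -> 'M[C]_(q,p)) (X : 'M[C]_(k * p)) :
  @ampl _ p q k (kraus K) X = \sum_l (1%:M *t K l) *m X *m adjmx (1%:M *t K l).
Proof.
rewrite /ampl /kraus.
under eq_bigr do under eq_bigr do rewrite tens_sumr.
rewrite exchange_big /=.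
under eq_bigr do rewrite exchange_big /=.
rewrite exchange_big /=; apply: eq_bigr => l _.
set Y := RHS; rewrite /Y -[in RHS](blocks_sum X) exchange_big /=.
rewrite mulmx_sumr mulmx_suml.
apply: eq_bigr => i _; rewrite mulmx_sumr mulmx_suml; apply: eq_bigr => j _.
by rewrite tens_conj.
Qed.

Lemma kraus_cptp m p q (K : 'I_m -> 'M[C]_(q,p)) :
  \sum_l adjmx (K l) *m K l = 1%:M ->
  completely_positive (kraus K) /\ trace_preserving (kraus K).
Proof.
move=> hK; split; first split.
- move=> a X Y; rewrite /kraus scaler_sumr -big_split /=; apply: eq_bigr => l _.
  by rewrite mulmxDr mulmxDl -scalemxAr -scalemxAl.
- move=> k X hX; rewrite ampl_kraus; apply: psd_sum => l _; exact: psd_conj.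
- move=> X; rewrite -[in RHS](mul1mx X) -hK mulmx_suml /kraus !raddf_sum.
  by apply: eq_bigr => l _; rewrite /= mxtrace_mulC mulmxA.
Qed.

End Q.
Section Q2.
Variable R : realType.
Local Notation C := R[i].

Lemma cptp_ext n m (E F : 'M[C]_n -> 'M[C]_m) : (forall X, E X = F X) ->
  completely_positive E /\ trace_preserving E ->
  completely_positive F /\ trace_preserving F.
Proof.
move=> h [[lin cp] tp]; split; first split.
- by move=> a X Y; rewrite -!h lin.
- move=> k X hX; have := cp k X hX; rewrite /ampl.
  by under eq_bigr do under eq_bigr do rewrite h.
- by move=> X; rewrite -h tp.
Qed.

Lemma kraus1_cptp p q (M : 'M[C]_(q,p)) : adjmx M *m M = 1%:M ->
  completely_positive (fun X => M *m X *m adjmx M) /\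
  trace_preserving (fun X => M *m X *m adjmx M).
Proof.
move=> h; apply: (@cptp_ext _ _ (kraus (fun _ : 'I_1 => M))).
  by move=> X; rewrite /kraus big_ord1.
by apply: kraus_cptp; rewrite big_ord1.
Qed.

Lemma kraus2_cptp p q (K0 K1 : 'M[C]_(q,p)) :
  adjmx K0 *m K0 + adjmx K1 *m K1 = 1%:M ->
  completely_positive (fun X => K0 *m X *m adjmx K0 + K1 *m X *m adjmx K1) /\
  trace_preserving (fun X => K0 *m X *m adjmx K0 + K1 *m X *m adjmx K1).
Proof.
move=> h; apply: (@cptp_ext _ _ (kraus (fun l : 'I_2 => if l == ord0 then K0 else K1))).
  by move=> X; rewrite /kraus big_ord_recl big_ord1.
by apply: kraus_cptp; rewrite big_ord_recl big_ord1.
Qed.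

Lemma psd_blockdiag n1 n2 (A : 'M[C]_n1) (B : 'M[C]_n2) :
  psd A -> psd B -> psd (block_mx A 0 0 B).
Proof.
move=> hA hB.
have -> : block_mx A 0 0 B =
  col_mx 1%:M 0 *m A *m adjmx (col_mx 1%:M 0) + col_mx 0 1%:M *m B *m adjmx (col_mx 0 1%:M).
  rewrite !adjmx_col !adjmx1 !adjmx0 [col_mx _ _ *m A]mul_col_mx [col_mx _ _ *m B]mul_col_mx.
  rewrite !mul_col_row add_block_mx.
  by rewrite !mul1mx !mul0mx !mulmx1 !mulmx0 !addr0 !add0r.
by apply: psdD; apply: psd_conj.
Qed.

Lemma out2 n n' (V : 'M[C]_(n',n)) (a : 'M[C]_n) b c (d : 'M[C]_n') :
  row_mx V 0 *m block_mx a b c d *m adjmx (row_mx V 0) +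
  row_mx 0 1%:M *m block_mx a b c d *m adjmx (row_mx 0 1%:M) =
  V *m a *m adjmx V + d.
Proof.
rewrite !adjmx_row !adjmx0 adjmx1 !mul_row_block !mul_row_col.
by rewrite !mul0mx !mul1mx !mulmx0 !mulmx1 !addr0 !add0r.
Qed.

Lemma compl2 n n' (V : 'M[C]_(n',n)) : adjmx V *m V = 1%:M ->
  adjmx (row_mx V 0) *m row_mx V 0 + adjmx (row_mx 0 1%:M) *m row_mx 0 (1%:M : 'M[C]_n') = 1%:M.
Proof.
move=> hV; rewrite !adjmx_row !adjmx0 adjmx1 !mul_col_row hV add_block_mx.
by rewrite !mul0mx !mulmx0 !mul1mx !addr0 !add0r -scalar_mx_block.
Qed.

Lemma herm_psd n (A : 'M[C]_n) : psd A -> adjmx A = A.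
Proof. by case. Qed.

Variable D : rel_ent R.
Arguments D : clear implicits.
Hypothesis Ha : prop_a D.
Hypothesis Hb : prop_b D.

Lemma D_iso_le n n' (V : 'M[C]_(n',n)) (S T : 'M[C]_n) (Q : 'M[C]_n') :
  adjmx V *m V = 1%:M -> psd S -> psd T -> psd Q ->
  (D n' (V *m S *m adjmx V) (V *m T *m adjmx V + Q)%R <= D n S T)%E.
Proof.
move=> hV hS hT hQ; rewrite -(Hb hS hT hQ).
have [cp tp] := kraus2_cptp (compl2 hV).
have := Ha cp tp (psd_blockdiag hS (@psd0 _ _)) (psd_blockdiag hT hQ).
by rewrite !out2 addr0.
Qed.

Lemma D_mono2 n (S T T2 : 'M[C]_n) : psd S -> psd T -> psd T2 ->
  (D n S (T + T2)%R <= D n S T)%E.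
Proof.
move=> hS hT hT2.
have h1 : adjmx (1%:M : 'M[C]_n) *m 1%:M = 1%:M by rewrite adjmx1 mulmx1.
have := D_iso_le h1 hS hT hT2.
by rewrite adjmx1 !mulmx1 !mul1mx.
Qed.

Lemma out1 n n' (V : 'M[C]_(n',n)) (P : 'M[C]_n') (Y : 'M[C]_n') :
  adjmx P = P ->
  col_mx (adjmx V) P *m Y *m adjmx (col_mx (adjmx V) P) =
  block_mx (adjmx V *m Y *m V) (adjmx V *m Y *m P) (P *m Y *m V) (P *m Y *m P).
Proof.
by move=> hP; rewrite adjmx_col adjmxK hP [col_mx _ _ *m Y]mul_col_mx mul_col_row.
Qed.

Lemma D_iso n n' (V : 'M[C]_(n',n)) (S T : 'M[C]_n) (Q : 'M[C]_n') :
  adjmx V *m V = 1%:M -> psd S -> psd T -> psd Q -> Q *m V = 0 ->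
  D n' (V *m S *m adjmx V) (V *m T *m adjmx V + Q) = D n S T.
Proof.
move=> hV hS hT hQ hQV; apply/le_anti/andP; split; first exact: D_iso_le.
pose P : 'M[C]_n' := 1%:M - V *m adjmx V.
have hP : adjmx P = P by rewrite /P adjmxB adjmx1 adjmxM adjmxK.
have hPV : P *m V = 0 by rewrite /P mulmxBl mul1mx -mulmxA hV mulmx1 subrr.
have hVP : adjmx V *m P = 0 by rewrite /P mulmxBr mulmx1 mulmxA hV mul1mx subrr.
have hVQ : adjmx V *m Q = 0.
  by rewrite -(herm_psd hQ) -adjmxM hQV adjmx0.
have hPQ : P *m Q = Q by rewrite /P mulmxBl mul1mx -mulmxA hVQ mulmx0 subr0.
have hQP : Q *m P = Q by rewrite /P mulmxBr mulmx1 mulmxA hQV mul0mx subr0.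
have hPP : P *m P = P by rewrite {1}/P mulmxBl mul1mx -mulmxA hVP mulmx0 subr0.
have hM : adjmx (col_mx (adjmx V) P) *m col_mx (adjmx V) P = 1%:M.
  by rewrite adjmx_col adjmxK hP mul_row_col hPP /P addrC subrK.
have [cp tp] := kraus1_cptp hM.
have hS' : psd (V *m S *m adjmx V) by exact: psd_conj.
have hT' : psd (V *m T *m adjmx V + Q) by apply: psdD => //; exact: psd_conj.
have := Ha cp tp hS' hT'; rewrite !out1 //.
have e1 : adjmx V *m (V *m S *m adjmx V) *m V = S.
  by rewrite !mulmxA hV mul1mx -mulmxA hV mulmx1.
have e2 : adjmx V *m (V *m S *m adjmx V) *m P = 0.
  by rewrite -!mulmxA hVP !mulmx0.
have e3 : P *m (V *m S *m adjmx V) *m V = 0 by rewrite !mulmxA hPV !mul0mx.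
have e4 : P *m (V *m S *m adjmx V) *m P = 0 by rewrite !mulmxA hPV !mul0mx.
have f1 : adjmx V *m (V *m T *m adjmx V + Q) *m V = T.
  by rewrite mulmxDr mulmxDl hVQ mul0mx addr0 !mulmxA hV mul1mx -mulmxA hV mulmx1.
have f2 : adjmx V *m (V *m T *m adjmx V + Q) *m P = 0.
  by rewrite mulmxDr mulmxDl hVQ mul0mx addr0 -!mulmxA hVP !mulmx0.
have f3 : P *m (V *m T *m adjmx V + Q) *m V = 0.
  by rewrite mulmxDr mulmxDl !mulmxA hPV !mul0mx add0r -mulmxA hQV mulmx0.
have f4 : P *m (V *m T *m adjmx V + Q) *m P = Q.
  by rewrite mulmxDr mulmxDl !mulmxA hPV !mul0mx add0r hPQ hQP.
by rewrite e1 e2 e3 e4 f1 f2 f3 f4 (Hb hS hT hQ).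
Qed.

End Q2.
Section Q3.
Variable R : realType.
Local Notation C := R[i].

Lemma sum_only n (G : 'I_n -> C) i : (forall j, j != i -> G j = 0) ->
  \sum_j G j = G i.
Proof. by move=> h; rewrite (bigD1 i) //= big1 ?addr0 // => j /h. Qed.

Lemma sum_idx m n (F : 'I_(m * n) -> C) :
  \sum_r F r = \sum_(k < m) \sum_(a < n) F (mxtens_index (k, a)).
Proof.
rewrite pair_big /=; apply: (reindex (fun p => mxtens_index (p.1, p.2))) => /=.
exists (@mxtens_unindex m n) => x _; last by rewrite -surjective_pairing mxtens_unindexK.
by rewrite mxtens_indexK -surjective_pairing.
Qed.

Lemma mul3E m n p q (M : 'M[C]_(m,n)) (X : 'M[C]_(n,p)) (N : 'M[C]_(p,q)) a b :
  (M *m X *m N) a b = \sum_r \sum_s M a r * X r s * N s b.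
Proof.
rewrite mxE; under eq_bigr do rewrite mxE mulr_suml.
by rewrite exchange_big.
Qed.

Lemma tensE1 m n (s : 'M[C]_n) i j a b :
  ((1%:M : 'M[C]_m) *t s) (mxtens_index (i, a)) (mxtens_index (j, b)) =
  (i == j)%:R * s a b.
Proof. by rewrite tensmxE mxE. Qed.

Lemma psd_tens1 k n (s : 'M[C]_n) : psd s -> psd ((1%:M : 'M[C]_k) *t s).
Proof.
move=> [hs qs]; split; first by rewrite adjmx_tens adjmx1 hs.
move=> v; rewrite mul3E sum_idx.
have E : forall i a, \sum_r adjmx v 0 (mxtens_index (i, a)) *
     (1%:M *t s) (mxtens_index (i, a)) r * v r 0 =
   \sum_b adjmx (\col_c v (mxtens_index (i, c)) 0) 0 a * s a b *
     (\col_c v (mxtens_index (i, c)) 0) b 0.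
  move=> i a; rewrite sum_idx (sum_only (i := i)).
    by apply: eq_bigr => b _; rewrite tensE1 eqxx mul1r !mxE.
  move=> j hj; apply: big1 => b _.
  by rewrite tensE1 eq_sym (negbTE hj) !(mul0r, mulr0).
under eq_bigr => i _ do under eq_bigr => a _ do rewrite E.
apply: sumr_ge0 => i _.
have := qs (\col_c v (mxtens_index (i, c)) 0).
by rewrite mul3E.
Qed.

End Q3.
Section Q4.
Variable R : realType.
Local Notation C := R[i].

Lemma mul3E_idx m n m' n' p q (M : 'M[C]_(p, m * n)) (X : 'M[C]_(m * n, m' * n'))
   (N : 'M[C]_(m' * n', q)) u w :
  (M *m X *m N) u w = \sum_(k < m) \sum_(a < n) \sum_(l < m') \sum_(b < n')
     M u (mxtens_index (k, a)) * X (mxtens_index (k, a)) (mxtens_index (l, b))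
       * N (mxtens_index (l, b)) w.
Proof.
rewrite mul3E sum_idx.
by under eq_bigr => k _ do under eq_bigr => a _ do rewrite sum_idx.
Qed.

Lemma sum_delta n (F : 'I_n -> C) k : \sum_l (l == k)%:R * F l = F k.
Proof.
by rewrite (sum_only (i := k)) ?eqxx ?mul1r // => l /negbTE ->; rewrite mul0r.
Qed.

Lemma ptrA_conj dA dB dA' dB' (A : 'M[C]_(dA',dA)) (B : 'M[C]_(dB',dB))
  (X : 'M[C]_(dA * dB)) : adjmx A *m A = 1%:M ->
  ptrA (A *t B *m X *m adjmx (A *t B)) = B *m ptrA X *m adjmx B.
Proof.
move=> hA; apply/matrixP => j j'.
rewrite [LHS]mxE [RHS]mul3E.
under eq_bigr => i _ do rewrite mul3E_idx.
rewrite exchange_big /=.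
under eq_bigr => k _ do rewrite exchange_big /=.
under eq_bigr => k _ do under eq_bigr => a _ do rewrite exchange_big /=.
under eq_bigr => k _ do under eq_bigr => a _ do under eq_bigr => l _ do
  rewrite exchange_big /=.
have E : forall k a l b,
  \sum_(i < dA') (A *t B) (mxtens_index (i, j)) (mxtens_index (k, a)) *
      X (mxtens_index (k, a)) (mxtens_index (l, b)) *
      adjmx (A *t B) (mxtens_index (l, b)) (mxtens_index (i, j')) =
  (l == k)%:R * (B j a * X (mxtens_index (k, a)) (mxtens_index (l, b))
      * Num.conj (B j' b)).
  move=> k a l b.
  have hlk := hA; move/matrixP: hlk => /(_ l k); rewrite !mxE => <-.
  rewrite mulr_suml; apply: eq_bigr => i _.
  rewrite adjmxE !tensmxE !mxE rmorphM; ring.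
under eq_bigr => k _ do under eq_bigr => a _ do under eq_bigr => l _ do
  under eq_bigr => b _ do rewrite E.
under eq_bigr => k _ do under eq_bigr => a _ do under eq_bigr => l _ do
  rewrite -mulr_sumr.
under eq_bigr => k _ do under eq_bigr => a _ do rewrite sum_delta.
rewrite exchange_big /=.
under eq_bigr => a _ do rewrite exchange_big /=.
apply: eq_bigr => a _; apply: eq_bigr => b _.
rewrite !mxE mulr_sumr mulr_suml; apply: eq_bigr => k _.
by [].
Qed.

End Q4.
Section Q5.
Variable R : realType.
Local Notation C := R[i].

Lemma psd_ptrA dA dB (X : 'M[C]_(dA * dB)) : psd X -> psd (ptrA X).
Proof.
move=> hX.
pose E (i : 'I_dA) : 'M[C]_(dB, dA * dB) :=
  \matrix_(j, r) (r == mxtens_index (i, j))%:R.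
have -> : ptrA X = \sum_i E i *m X *m adjmx (E i).
  apply/matrixP => j j'; rewrite !mxE summxE; apply: eq_bigr => i _.
  rewrite mul3E.
  under eq_bigr => r _ do under eq_bigr => s _ do rewrite adjmxE !mxE.
  under eq_bigr => r _ do under eq_bigr => s _ do rewrite -mulrA.
  under eq_bigr => r _ do rewrite -mulr_sumr.
  rewrite sum_delta.
  under eq_bigr => s _ do rewrite rmorph_nat mulrC.
  by rewrite sum_delta.
by apply: psd_sum => i _; apply: psd_conj.
Qed.

Lemma out3 p q q' (M : 'M[C]_(q,p)) (N : 'M[C]_(q',p)) (Y : 'M[C]_p) :
  col_mx M 0 *m Y *m adjmx (col_mx M 0) + col_mx 0 N *m Y *m adjmx (col_mx 0 N) =
  block_mx (M *m Y *m adjmx M) 0 0 (N *m Y *m adjmx N).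
Proof.
rewrite !adjmx_col !adjmx0 [col_mx M 0 *m Y]mul_col_mx [col_mx 0 N *m Y]mul_col_mx.
by rewrite !mul_col_row !mul0mx !mulmx0 add_block_mx !addr0 !add0r.
Qed.

Lemma adjmx_delta n m (i : 'I_n) (j : 'I_m) :
  adjmx (delta_mx i j : 'M[C]_(n,m)) = delta_mx j i.
Proof. by apply/matrixP => a b; rewrite !mxE rmorph_nat andbC. Qed.

Lemma sum_delta_diag n : \sum_(l < n) (delta_mx l l : 'M[C]_n) = 1%:M.
Proof.
apply/matrixP => a b; rewrite summxE [RHS]mxE.
rewrite (sum_only (i := a)); first by rewrite mxE eqxx /= eq_sym.
by move=> l hl; rewrite mxE eq_sym (negbTE hl).
Qed.

Lemma trace_density n (X : 'M[C]_n) : \tr X = 1 -> (0 < n)%N.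
Proof.
case: n X => [|n] X //; rewrite /mxtrace big_ord0 => /eqP.
by rewrite eq_sym oner_eq0.
Qed.

Variable D : rel_ent R.
Arguments D : clear implicits.
Hypothesis Ha : prop_a D.
Hypothesis Hb : prop_b D.

Section Iso.
Variables (dA dB dA' dB' : nat) (VA : 'M[C]_(dA', dA)) (VB : 'M[C]_(dB', dB)).
Hypothesis hVA : adjmx VA *m VA = 1%:M.
Hypothesis hVB : adjmx VB *m VB = 1%:M.
Local Notation W := (VA *t VB).

Lemma hW : adjmx W *m W = 1%:M.
Proof. by rewrite adjmx_tens tensmx_mul hVA hVB tens11. Qed.

Lemma proj_facts n n' (V : 'M[C]_(n', n)) : adjmx V *m V = 1%:M ->
  let P := 1%:M - V *m adjmx V in
  [/\ adjmx P = P, P *m P = P, P *m V = 0 & V *m adjmx V + P = 1%:M].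
Proof.
move=> hV P; split.
- by rewrite /P adjmxB adjmx1 adjmxM adjmxK.
- by rewrite {1}/P mulmxBl mul1mx /P mulmxBr mulmx1 !mulmxA -(mulmxA V) hV mulmx1 subrr subr0.
- by rewrite /P mulmxBl mul1mx -mulmxA hV mulmx1 subrr.
- by rewrite /P addrC subrK.
Qed.

Lemma key (rho : 'M[C]_(dA * dB)) (s : 'M[C]_dB) : psd rho -> psd s ->
  D (dA' * dB')%N (W *m rho *m adjmx W) (1%:M *t (VB *m s *m adjmx VB)) =
  D (dA * dB)%N rho (1%:M *t s).
Proof.
move=> hrho hs.
have [hPh hPP hPV hPs] := proj_facts hVA.
set PA := 1%:M - VA *m adjmx VA in hPh hPP hPV hPs.
have dec : (1%:M : 'M[C]_dA') *t (VB *m s *m adjmx VB) =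
   W *m (1%:M *t s) *m adjmx W + PA *t (VB *m s *m adjmx VB).
  by rewrite adjmx_tens !tensmx_mul mulmx1 -tensmxDl hPs.
have hQ : psd (PA *t (VB *m s *m adjmx VB)).
  have -> : PA *t (VB *m s *m adjmx VB) =
     (PA *t VB) *m (1%:M *t s) *m adjmx (PA *t VB).
    by rewrite adjmx_tens !tensmx_mul mulmx1 hPh hPP.
  by apply: psd_conj; apply: psd_tens1.
have hQW : PA *t (VB *m s *m adjmx VB) *m W = 0.
  by rewrite tensmx_mul hPV tens0mx.
by rewrite dec (D_iso Ha Hb hW hrho (psd_tens1 _ hs) hQ hQW).
Qed.

Lemma key2 (rho : 'M[C]_(dA * dB)) (s' : 'M[C]_dB') : psd rho -> psd s' ->
  (D (dA * dB)%N rho (1%:M *t (adjmx VB *m s' *m VB)) <=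
   D (dA' * dB')%N (W *m rho *m adjmx W) (1%:M *t s'))%E.
Proof.
move=> hrho hs'.
have [hPh hPP hPW hPs] := proj_facts hW.
set P := 1%:M - W *m adjmx W in hPh hPP hPW hPs.
have hK : adjmx (col_mx (adjmx W) (0 : 'M[C]_(dA' * dB', dA' * dB'))) *m col_mx (adjmx W) 0 +
          adjmx (col_mx 0 P) *m col_mx (0 : 'M[C]_(dA * dB, dA' * dB')) P = 1%:M.
  rewrite !adjmx_col.
  by rewrite adjmxK !adjmx0 hPh !mul_row_col hPP !mul0mx !addr0 ?add0r hPs.
have [cp tp] := kraus2_cptp hK.
have hr' : psd (W *m rho *m adjmx W) by apply: psd_conj.
have hY : psd ((1%:M : 'M[C]_dA') *t s') by apply: psd_tens1.
have := Ha cp tp hr' hY.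
rewrite !out3.
have -> : adjmx W *m (W *m rho *m adjmx W) *m adjmx (adjmx W) = rho.
  by rewrite adjmxK !mulmxA hW mul1mx -mulmxA hW mulmx1.
have -> : P *m (W *m rho *m adjmx W) *m adjmx P = 0.
  by rewrite !mulmxA hPW !mul0mx.
have -> : adjmx W *m (1%:M *t s') *m adjmx (adjmx W) =
          1%:M *t (adjmx VB *m s' *m VB).
  by rewrite adjmxK adjmx_tens !tensmx_mul mulmx1 hVA.
have hs : psd (adjmx VB *m s' *m VB).
  by rewrite -{2}(adjmxK VB); exact: psd_conj.
by rewrite (Hb hrho (psd_tens1 _ hs) (psd_conj _ hY)).
Qed.

End Iso.
End Q5.
Lemma rev_state (R : realType) dB dB' (VB : 'M[R[i]]_(dB', dB))
  (hVB : adjmx VB *m VB = 1%:M) (s' : 'M[R[i]]_dB') (i0 : 'I_dB) :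
  density s' -> exists T2, psd T2 /\ density (adjmx VB *m s' *m VB + T2).
Proof.
move=> [hs' ht].
have [hPh hPP hPV hPs] := proj_facts hVB.
set PB := 1%:M - VB *m adjmx VB in hPh hPP hPV hPs.
pose K (l : 'I_dB') : 'M[R[i]]_(dB, dB') := delta_mx i0 l *m PB.
exists (\sum_l K l *m s' *m adjmx (K l)).
have hT2 : psd (\sum_l K l *m s' *m adjmx (K l)).
  by apply: psd_sum => l _; apply: psd_conj.
have hs : psd (adjmx VB *m s' *m VB).
  by rewrite -{2}(adjmxK VB); exact: psd_conj.
split => //; split; first exact: psdD.
have hKK : \sum_l adjmx (K l) *m K l = PB.
  under eq_bigr => l _ do rewrite /K adjmxM adjmx_delta hPh mulmxA -(mulmxA PB) mul_delta_mx.
  by rewrite -mulmx_suml -mulmx_sumr sum_delta_diag mulmx1 hPP.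
rewrite mxtraceD mxtrace_mulC mulmxA raddf_sum /=.
under eq_bigr => l _ do rewrite mxtrace_mulC mulmxA.
rewrite -raddf_sum /= -mulmx_suml hKK -mxtraceD -mulmxDl hPs mul1mx //.
Qed.

Theorem lemma8 (R : realType) (D : rel_ent R)
  (H : forall dA dB : nat, 'M[R[i]]_(dA * dB) -> \bar R)
  (Ha : prop_a D) (Hb : prop_b D) (HH : is_cond_entropy D H)
  (dA dB dA' dB' : nat) (VA : 'M[R[i]]_(dA', dA)) (VB : 'M[R[i]]_(dB', dB))
  (hVA : is_isometry VA) (hVB : is_isometry VB)
  (rho : 'M[R[i]]_(dA * dB)) (hrho : density rho) :
  H dA dB rho = H dA' dB' ((VA *t VB) *m rho *m adjmx (VA *t VB)).
Proof.
have hW := hW hVA hVB.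
have hpsd := hrho.1.
have hrho' : density ((VA *t VB) *m rho *m adjmx (VA *t VB)).
  split; first exact: psd_conj.
  by rewrite mxtrace_mulC mulmxA hW mul1mx hrho.2.
case: HH => [H1 | H2].
  rewrite H1 // H1 // /Hcond1 ptrA_conj //.
  by rewrite (key Ha Hb hVA hVB hpsd (psd_ptrA hpsd)).
apply/le_anti/andP; split.
  have [[s [hs ->]] _] := H2 _ _ _ hrho.
  have [_ hmax] := H2 _ _ _ hrho'.
  have hs' : density (VB *m s *m adjmx VB).
    split; first exact: psd_conj hs.1.
    by rewrite mxtrace_mulC mulmxA hVB mul1mx hs.2.
  apply: le_trans (hmax _ hs').
  by rewrite /Hcond_sigma (key Ha Hb hVA hVB hpsd hs.1).
have [[s' [hs' ->]] _] := H2 _ _ _ hrho'.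
have [_ hmax] := H2 _ _ _ hrho.
have : (0 < dA * dB)%N by apply: trace_density hrho.2.
rewrite muln_gt0 => /andP [_ hdB].
have [T2 [hT2 hsig]] := rev_state hVB (Ordinal hdB) hs'.
apply: le_trans (hmax _ hsig).
rewrite /Hcond_sigma leeN2 tensmxDr.
have hs : psd (adjmx VB *m s' *m VB).
  by rewrite -{2}(adjmxK VB); exact: psd_conj hs'.1.
apply: le_trans (D_mono2 Ha Hb hpsd (psd_tens1 _ hs) (psd_tens1 _ hT2)) _.
exact: (key2 Ha Hb hVA hVB hpsd hs'.1).
Qed.
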